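(* Let $n$ be the number of worker nodes, let $q\ge n$ be an odd integer, $\theta = 2\pi/q$, and let $1\le k_A\le n$. Let $\mathbf{R}_\theta = \begin{bmatrix}\cos\theta & -\sin\theta\\ \sin\theta & \cos\theta\end{bmatrix}$. Let $\mathbf{G}^{rot}$ be the real $2k_A\times 2n$ matrix whose $(i,j)$-th $2\times 2$ block is $\mathbf{R}_\theta^{ji}$ for $i\in\{0,\dots,k_A-1\}$, $j\in\{0,\dots,n-1\}$. A matrix $\mathbf{A}\in\mathbb{R}^{t\times r}$ is split into $2k_A$ equal block-columns $\mathbf{A}_{\langle\alpha,\beta\rangle}$, $\alpha\in\{0,\dots,k_A-1\}$, $\beta\in\{0,1\}$ (ordered lexicographically), and worker $i$ stores $\hat{\mathbf{A}}_{\langle i,j\rangle}=\sum_{\alpha,\beta}\mathbf{G}^{rot}(2\alpha+\beta,2i+j)\mathbf{A}_{\langle\alpha,\beta\rangle}$ for $j\in\{0,1\}$ together with $\mathbf{x}\in\mathbb{R}^t$, and returns $\hat{\mathbf{A}}_{\langle i,j\rangle}^T\mathbf{x}$, $j=0,1$. Then the scheme has threshold $k_A$: for every set of distinct worker indices $i_0,\dots,i_{k_A-1}\in\{0,\dots,n-1\}$, the $2k_A\times 2k_A$ recovery matrix $\tilde{\mathbf{G}}^{rot}$ formed by the block-columns $i_0,\dots,i_{k_A-1}$ of $\mathbf{G}^{rot}$ (i.e. whose $(a,b)$ block is $\mathbf{R}_\theta^{i_b a}$) is nonsingular, so $\mathbf{A}^T\mathbf{x}$ can be recovered from the results of any $k_A$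 workers. Moreover, the worst-case condition number over all such choices satisfies $\max\kappa(\tilde{\mathbf{G}}^{rot}) \le O(q^{\,q-k_A+c_1})$ with $c_1=5.5$.
   Context: For a square matrix $\mathbf{M}$, $\kappa(\mathbf{M})=\|\mathbf{M}\|\|\mathbf{M}^{-1}\|$ with $\|\cdot\|$ the largest singular value. Recovery: for each coordinate position, the row vector $\mathbf{m}\in\mathbb{R}^{1\times 2k_A}$ of the corresponding entries of $\mathbf{A}_{\langle\alpha,\beta\rangle}^T\mathbf{x}$ and the row vector $\mathbf{c}$ of the corresponding received entries satisfy $\mathbf{m}\tilde{\mathbf{G}}^{rot}=\mathbf{c}$. A scheme has threshold $\tau$ if the master can decode from any $\tau$ completed workers. *)

(* Defs.v *)
From HB Require Import structures.
From mathcomp Require Import all_boot all_order all_algebra.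
From mathcomp Require Import all_classical all_reals all_analysis.
From mathcomp Require Import zify.
Set Implicit Arguments. Unset Strict Implicit. Unset Printing Implicit Defensive.
Import Order.TTheory GRing.Theory Num.Theory.
Local Open Scope ring_scope.

Lemma blkidx_proof (k : nat) (c : 'I_(2 * k)) : (c %/ 2 < k)%N.
Proof. have := ltn_ord c. lia. Qed.
Definition blkidx (k : nat) (c : 'I_(2 * k)) : 'I_k := Ordinal (blkidx_proof c).

Lemma parity_proof (k : nat) (c : 'I_(2 * k)) : (c %% 2 < 2)%N.
Proof. by rewrite ltn_mod. Qed.
Definition parity (k : nat) (c : 'I_(2 * k)) : 'I_2 := Ordinal (parity_proof c).

Lemma wcol_proof (n : nat) (i : 'I_n) (b : 'I_2) : (2 * i + b < 2 * n)%N.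
Proof. have := ltn_ord i; have := ltn_ord b. lia. Qed.
Definition wcol (n : nat) (i : 'I_n) (b : 'I_2) : 'I_(2 * n) := Ordinal (wcol_proof i b).

Section Defs.
Variable R : realType.

Definition theta (q : nat) : R := 2 * pi / q%:R.

Definition Rtheta (q : nat) : 'M[R]_2 :=
  \matrix_(a < 2, b < 2)
    (if a == b then cos (theta q)
     else if (a : nat) == 0%N then - sin (theta q) else sin (theta q)).

Definition Grot (q n kA : nat) : 'M[R]_(2 * kA, 2 * n) :=
  \matrix_(r < 2 * kA, c < 2 * n)
    ((Rtheta q) ^+ (blkidx c * blkidx r)) (parity r) (parity c).

Definition Gtilde (q n kA : nat) (sel : 'I_kA -> 'I_n) : 'M[R]_(2 * kA) :=
  colsub (fun c : 'I_(2 * kA) => wcol (sel (blkidx c)) (parity c)) (Grot q n kA).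

Definition vnorm (m : nat) (v : 'cV[R]_m) : R := Num.sqrt (\sum_(i < m) v i 0 ^+ 2).

Definition opnorm (m : nat) (M : 'M[R]_m) : R :=
  sup [set vnorm (M *m v) | v in [set v : 'cV[R]_m | vnorm v <= 1]]%classic.

Definition cond_num (m : nat) (M : 'M[R]_m) : R := opnorm M * opnorm (invmx M).

End Defs.

(* Main.v *)
Require Import Defs.
From HB Require Import structures.
From mathcomp Require Import all_boot all_order all_algebra.
From mathcomp Require Import all_classical all_reals all_analysis.
From mathcomp Require Import complex.
From mathcomp Require Import ring lra zify.
Import Order.TTheory GRing.Theory Num.Theory.
Local Open Scope ring_scope.
Local Open Scope complex_scope.

Section Core.
Variable F : numFieldType.
Variables (q : nat) (w0 : F).
Hypothesis q_gt0 : (0 < q)%N.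
Hypothesis wq : w0 ^+ q = 1.
Hypothesis wn : forall j, `|w0 ^+ j| = 1.
Hypothesis wd : forall m, (0 < m < q)%N -> 2 / q%:R <= `|w0 ^+ m - 1|.

Lemma q_neq0 : q%:R != 0 :> F.
Proof. by rewrite pnatr_eq0 -lt0n. Qed.

Lemma geo0 m : (0 < m < q)%N -> \sum_(c < q) (w0 ^+ m) ^+ c = 0.
Proof.
move=> hm.
have h1 : w0 ^+ m - 1 != 0.
  apply/eqP => h; have := wd _ hm; rewrite h normr0.
  have h0 : 0 < 2 / q%:R :> F by rewrite divr_gt0 // ltr0n.
  by move=> /(lt_le_trans h0); rewrite ltxx.
have h2 : (w0 ^+ m) ^+ q - 1 = 0 by rewrite exprAC wq expr1n subrr.
by move: h2; rewrite subrX1 => /eqP; rewrite mulf_eq0 (negbTE h1) /= => /eqP.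
Qed.

Lemma wmod m : w0 ^+ m = w0 ^+ (m %% q).
Proof. by rewrite {1}(divn_eq m q) exprD mulnC exprM wq expr1n mul1r. Qed.

Lemma geo m : \sum_(c < q) (w0 ^+ m) ^+ c = if (q %| m)%N then q%:R else 0.
Proof.
rewrite wmod; case: ifP => hd.
  have -> : (m %% q = 0)%N by apply/eqP.
  by rewrite expr0 (eq_bigr (fun _ => 1)) ?sumr_const ?card_ord // => i _; rewrite expr1n.
apply: geo0; rewrite ltn_mod q_gt0 andbT lt0n.
by rewrite -/(dvdn q m) hd.
Qed.

Lemma dist_lb (a c : 'I_q) : a != c -> 2 / q%:R <= `|w0 ^+ a - w0 ^+ c|.
Proof.
wlog lt_ca : a c / (c < a)%N.
  move=> H ne; case: (ltngtP c a) => h; first exact: H.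
    by rewrite distrC; apply: H; rewrite // eq_sym.
  by move: ne; rewrite -(inj_eq val_inj) /= h eqxx.
move=> _.
have -> : w0 ^+ a - w0 ^+ c = w0 ^+ c * (w0 ^+ (a - c) - 1).
  by rewrite mulrBr mulr1 -exprD subnKC // ltnW.
by rewrite normrM wn mul1r; apply: wd; rewrite subn_gt0 lt_ca /= (leq_ltn_trans (leq_subr _ _)).
Qed.

Lemma dist_ub (a c : nat) : `|w0 ^+ a - w0 ^+ c| <= 2.
Proof. by rewrite (le_trans (ler_normB _ _)) // !wn. Qed.


Variables (k : nat) (w : nat -> F).
Hypothesis kq : (k <= q)%N.
Local Notation P := (\poly_(i < k) w i).

Lemma idft (a : nat) : (a < k)%N ->
  q%:R * w a = \sum_(c < q) P.[w0 ^+ c] * (w0 ^+ c) ^+ (q - a).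
Proof.
move=> ak.
under eq_bigr => c _ do rewrite horner_poly mulr_suml.
rewrite exchange_big /=.
under eq_bigr => i _ do under eq_bigr => c _ do
  rewrite -mulrA -exprD exprAC.
under eq_bigr => i _ do rewrite -mulr_sumr geo.
rewrite (bigD1 (Ordinal ak)) //= big1 ?addr0.
  rewrite addnC subnK; first by rewrite dvdnn mulrC.
  by rewrite (leq_trans (ltnW ak)).
move=> i /= ne; case: ifP => hd; last by rewrite mulr0.
exfalso.
have ne' : (nat_of_ord i != a) by apply: contra ne => /eqP h; apply/eqP/val_inj.
have iq : (i < q)%N by rewrite (leq_trans (ltn_ord i)).
have aq : (a < q)%N by rewrite (leq_trans ak).
case: (ltngtP i a) => h.
- have h1 : (0 < i + (q - a))%N by rewrite addn_gt0 subn_gt0 aq orbT.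
  have := dvdn_leq h1 hd; move: h aq; lia.
- have e1 : (i + (q - a) = (i - a) + q)%N by move: h aq; lia.
  move: hd; rewrite e1 dvdn_addl ?dvdnn // => hd.
  have h1 : (0 < i - a)%N by rewrite subn_gt0.
  have := dvdn_leq h1 hd; move: h iq; lia.
- by move: ne'; rewrite h eqxx.
Qed.

Lemma idft_norm (a : nat) : (a < k)%N ->
  q%:R * `|w a| <= \sum_(c < q) `|P.[w0 ^+ c]|.
Proof.
move=> ak; rewrite -[q%:R]ger0_norm ?ler0n // -normrM idft //.
apply: le_trans (ler_norm_sum _ _ _) _; apply: ler_sum => c _.
by rewrite normrM -exprM wn mulr1.
Qed.

Variable e : 'I_k -> 'I_q.
Hypothesis e_inj : injective e.
Local Notation Y := (\sum_(b < k) `|P.[w0 ^+ e b]|).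

Lemma sumZ (H : {poly F}) : (size H < q)%N ->
  \sum_(c < q) H.[w0 ^+ c] * w0 ^+ c = 0.
Proof.
move=> sH.
under eq_bigr => c _ do rewrite horner_coef mulr_suml.
rewrite exchange_big /= big1 // => t _.
under eq_bigr => c _ do rewrite -mulrA -exprSr exprAC.
rewrite -mulr_sumr geo0 ?mulr0 //=.
by rewrite (leq_ltn_trans _ sH).
Qed.

Lemma val_bound (c : 'I_q) : `|P.[w0 ^+ c]| <= q%:R ^+ (q - k - 1) * Y.
Proof.
have Y0 : 0 <= Y by apply: sumr_ge0 => b _.
have q1 : 1 <= q%:R :> F by rewrite ler1n.
set E := [set e b | b in 'I_k].
case: (boolP (c \in E)) => cE.
  case/imsetP: cE => b _ ->.
  apply: le_trans (_ : Y <= _); last by rewrite ler_peMl // exprn_ege1.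
  by rewrite (bigD1 b) //= lerDl sumr_ge0.
set T := [set c' | (c' \notin E) && (c' != c)].
set D := \prod_(c' <- enum T) ('X - (w0 ^+ c')%:P).
have cEk : #|E| = k by rewrite card_imset // card_ord.
have cardT : (#|T| + k + 1 <= q)%N.
  have : T \proper ~: E.
    apply/fintype.properP; split.
      by apply/fintype.subsetP => x; rewrite !inE => /andP[].
    by exists c; rewrite !inE ?eqxx ?andbF.
  move/proper_card; have := cardsC E; rewrite cEk card_ord.
  by lia.
have sD : size D = #|T|.+1 by rewrite size_prod_XsubC -cardE.
have sH : (size (P * D)%R < q)%N.
  apply: leq_ltn_trans (size_polyMleq _ _) _.
  rewrite sD addnS /=.
  apply: leq_ltn_trans (_ : (k + #|T| < q)%N); last by lia.
  by rewrite leq_add2r size_poly.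
have Z := sumZ _ sH.
have hD x : D.[x] = \prod_(c' <- enum T) (x - w0 ^+ c').
  by rewrite horner_prod; apply: eq_bigr => i _; rewrite hornerXsubC.
rewrite (bigID (fun c' => c' \in E)) /= in Z.
rewrite [X in _ + X](bigD1 c) //= in Z.
rewrite [X in _ + (_ + X)]big1 ?addr0 in Z; last first.
  move=> c' /andP[c'E c'c]; rewrite hornerM hD.
  apply/eqP; rewrite !mulf_eq0; apply/orP; left; apply/orP; right.
  rewrite prodf_seq_eq0; apply/hasP; exists c'; first by rewrite mem_enum !inE c'E.
  by rewrite subrr eqxx.
rewrite (big_imset _ (in2W e_inj)) /= in Z.
move/eqP: Z; rewrite addrC addr_eq0 => /eqP Z.
have nT0 : 0 < (2 / q%:R) ^+ #|T| :> F by rewrite exprn_gt0 // divr_gt0 // ltr0n.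
have lbD : (2 / q%:R) ^+ #|T| <= `|D.[w0 ^+ c]|.
  rewrite hD normr_prod big_enum -prodr_const /=.
  apply: ler_prod => i; rewrite inE => /andP[_ ic]; rewrite divr_ge0 ?ler0n //=.
  by rewrite dist_lb // eq_sym.
have ubD b : `|D.[w0 ^+ e b]| <= 2 ^+ #|T|.
  rewrite hD normr_prod big_enum -prodr_const /=.
  by apply: ler_prod => i _; rewrite normr_ge0 dist_ub.
have key : `|P.[w0 ^+ c]| * (2 / q%:R) ^+ #|T| <= 2 ^+ #|T| * Y.
  apply: le_trans (_ : `|P.[w0 ^+ c]| * `|D.[w0 ^+ c]| <= _).
    by apply: ler_wpM2l => //.
  have -> : `|P.[w0 ^+ c]| * `|D.[w0 ^+ c]| = `|(P * D).[w0 ^+ c] * w0 ^+ c|.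
    by rewrite normrM wn mulr1 hornerM normrM.
  rewrite Z normrN; apply: le_trans (ler_norm_sum _ _ _) _.
  rewrite mulr_sumr; apply: ler_sum => b _.
  rewrite normrM wn mulr1 hornerM normrM [X in _ <= X]mulrC.
  by apply: ler_wpM2l => //.
rewrite -(ler_pM2r nT0); apply: le_trans key _.
have -> : 2 ^+ #|T| = q%:R ^+ #|T| * (2 / q%:R) ^+ #|T| :> F.
  by rewrite -exprMn mulrC divfK // q_neq0.
rewrite mulrAC; apply: ler_wpM2r; first exact: ltW.
apply: ler_wpM2r => //.
by apply: ler_weXn2l => //; lia.
Qed.

Lemma core (a : nat) : (a < k)%N -> `|w a| <= q%:R ^+ (q - k - 1) * Y.
Proof.
move=> ak.
have q0 : 0 < q%:R :> F by rewrite ltr0n.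
rewrite -(ler_pM2l q0); apply: le_trans (idft_norm _ ak) _.
apply: le_trans (_ : \sum_(c < q) q%:R ^+ (q - k - 1) * Y <= _).
  by apply: ler_sum => c _; apply: val_bound.
by rewrite sumr_const card_ord mulr_natl.
Qed.

End Core.


Section T.
Variable R : realType.
Variable q : nat.
Local Notation th := (theta R q).
Definition om : R[i] := (cos th) +i* (sin th).

Lemma mulcE (a b c d : R) : (a +i* b) * (c +i* d) = (a * c - b * d) +i* (a * d + b * c).
Proof. by []. Qed.

Lemma omX j : om ^+ j = cos (j%:R * th) +i* sin (j%:R * th).
Proof.
elim: j => [|j IH]; first by rewrite expr0 mul0r cos0 sin0.
rewrite exprS IH /om mulcE -natr1 mulrDl mul1r cosD sinD.
apply/eqP; rewrite eq_complex /=; apply/andP; split; apply/eqP.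
  ring.
ring.
Qed.

Lemma omN j : `|om ^+ j| = 1.
Proof. by rewrite omX normc_def /= cos2Dsin2 sqrtr1. Qed.

Lemma omq : (0 < q)%N -> om ^+ q = 1.
Proof.
move=> q0; rewrite omX /theta mulrC divfK ?pnatr_eq0 -?lt0n //.
by rewrite mulr_natl cos2pi sin2pi.
Qed.

Definition A (x : R) := 2 - 2 * cos x.

Lemma omD j : `|om ^+ j - 1| ^+ 2 = (A (j%:R * th))%:C.
Proof.
rewrite -add_Re2_Im2 omX /=; congr (_ %:C).
have := cos2Dsin2 (j%:R * th); rewrite /A subr0; lra.
Qed.


Lemma RaddC (a b : R) : (a + b)%:C = a%:C + b%:C :> R[i].
Proof. by apply/eqP; rewrite eq_complex /= addr0 !eqxx. Qed.
Lemma RmulC (a b : R) : (a * b)%:C = a%:C * b%:C :> R[i].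
Proof. by apply/eqP; rewrite eq_complex /= !mulr0 mul0r subr0 addr0 !eqxx. Qed.
Lemma RnatC n : (n%:R : R)%:C = n%:R :> R[i].
Proof.
elim: n => [|n IH]; first by [].
by rewrite -natr1 RaddC IH -natr1.
Qed.

Lemma cos_le_in (x y : R) : 0 <= y -> y <= x -> x <= pi -> cos x <= cos y.
Proof.
move=> y0 yx xpi; case: (ltgtP y x) => h.
- apply: ltW; rewrite (ltr_cos) //; rewrite in_itv /= ?y0 ?xpi ?(le_trans y0 yx) //.
  by rewrite (le_trans yx xpi).
- by move: h; rewrite ltNge yx.
- by rewrite h.
Qed.

Lemma th_ge0 : 0 <= th.
Proof. by rewrite /theta divr_ge0 // ?ler0n // mulr_ge0 // pi_ge0. Qed.

Lemma cos_le (m : nat) : (2 <= q)%N -> (0 < m < q)%N -> cos (m%:R * th) <= cos th.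
Proof.
move=> q2 /andP[m0 mq].
have q0 : q%:R != 0 :> R by rewrite pnatr_eq0 -lt0n (leq_trans _ q2).
have qth : q%:R * th = pi *+ 2 by rewrite /theta mulrC divfK // mulr_natl.
pose m' := if (2 * m <= q)%N then m else (q - m)%N.
have -> : cos (m%:R * th) = cos (m'%:R * th).
  rewrite /m'; case: ifP => // _.
  rewrite natrB; last exact: ltnW.
  rewrite mulrBl qth cosB cos2pi sin2pi; lra.
have m'1 : (1 <= m')%N by rewrite /m'; case: ifP => //; rewrite subn_gt0.
have m'q : (2 * m' <= q)%N by rewrite /m'; case: ifP => // /negbT; lia.
apply: cos_le_in; first exact: th_ge0.
  by rewrite ler_peMl ?th_ge0 // ler1n.
have q0' : 0 < q%:R :> R by rewrite ltr0n (leq_trans _ q2).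
rewrite /theta mulrA ler_pdivrMr //.
rewrite mulrC mulrAC [X in _ <= X]mulrC ler_pM2r ?pi_gt0 //.
by rewrite -natrM ler_nat.
Qed.

Lemma tele j : `|om ^+ j - 1| <= j%:R * `|om - 1|.
Proof.
elim: j => [|j IH]; first by rewrite expr0 subrr normr0 mul0r.
have -> : om ^+ j.+1 - 1 = om * (om ^+ j - 1) + (om - 1).
  by rewrite exprS; ring.
apply: le_trans (ler_normD _ _) _.
rewrite normrM -[om]expr1 omN mul1r expr1 -natr1 mulrDl mul1r.
by rewrite lerD2r.
Qed.

Lemma A_ge0 x : 0 <= A x.
Proof. by rewrite /A subr_ge0 -[2 in X in _ <= X]mulr1 ler_wpM2l // cos_le1. Qed.

Lemma Ath : (3 <= q)%N -> odd q -> 4 / q%:R ^+ 2 <= A th.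
Proof.
move=> q3 oq.
set j := q./2.
have qj : q = (2 * j + 1)%N.
  by rewrite -[q in LHS]odd_double_half oq /j -mul2n addnC.
have q0 : 0 < q%:R :> R by rewrite ltr0n (leq_trans _ q3).
have Aj : 2 <= A (j%:R * th).
  have -> : j%:R * th = pi - pi / q%:R.
    rewrite /theta qj natrD natrM /=; field.
    apply: lt0r_neq0; have : 0 <= j%:R :> R by rewrite ler0n.
    lra.
  rewrite /A cosB cospi sinpi.
  have : 0 <= cos (pi / q%:R) :> R.
    apply: cos_ge0_pihalf; apply/andP; split.
      by rewrite (le_trans _ (_ : 0 <= _)) ?oppr_le0 ?divr_ge0 ?pi_ge0 ?ler0n // ltW.
    rewrite ler_pM2l ?pi_gt0 // lef_pV2 ?posrE ?ltr0n //; last exact: (leq_trans _ q3).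
    by rewrite ler_nat (leq_trans _ q3).
  lra.
have tj := tele j.
have : `|om ^+ j - 1| ^+ 2 <= (j%:R * `|om - 1|) ^+ 2.
  by rewrite !expr2; apply: ler_pM => //; exact: normr_ge0.
have o1 := omD 1; rewrite expr1 mul1r in o1.
rewrite exprMn omD o1 expr2 -RnatC -!RmulC lecR => hj.
have hA := A_ge0 th.
rewrite ler_pdivrMr ?exprn_gt0 //.
have : 0 <= j%:R :> R by rewrite ler0n.
move: hj Aj hA; set J := (j%:R : R); set a := A th; set b := A _.
move=> hj Aj hA J0.
rewrite [in q%:R]qj natrD natrM -/J.
have Ja : 0 <= J * a by rewrite mulr_ge0.
nra.
Qed.

Lemma omd (m : nat) : odd q -> (0 < m < q)%N -> 2 / q%:R <= `|om ^+ m - 1|.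
Proof.
move=> oq /andP[m0 mq].
have q3 : (3 <= q)%N.
  have : (2 <= q)%N by rewrite (leq_trans _ mq) // ltnS.
  by case: q oq {mq} => [|[|[|]]].
have q0 : 0 < q%:R :> R by rewrite ltr0n (leq_trans _ q3).
have qC : 0 < q%:R :> R[i] by rewrite ltr0n (leq_trans _ q3).
rewrite ler_pdivrMr //.
rewrite -(ler_pXn2r (_ : (0 < 2)%N)); first last.
- by rewrite nnegrE mulr_ge0 ?normr_ge0 // ltW.
- by rewrite nnegrE ler0n.
- by [].
have h1 : A th <= A (m%:R * th).
  rewrite /A lerD2l lerN2; apply: ler_wpM2l => //; apply: cos_le; rewrite ?m0 ?mq //.
  exact: leq_trans q3.
have h2 := Ath q3 oq.
rewrite exprMn omD !expr2 -!RnatC -!RmulC lecR.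
have := le_trans h2 h1; rewrite ler_pdivrMr ?exprn_gt0 // expr2 => h.
nra.
Qed.
End T.


Notation o1 := (lift ord0 ord0 : 'I_2).

Lemma blk_wcol (k : nat) (a : 'I_k) (b : 'I_2) : blkidx (wcol a b) = a.
Proof. apply: val_inj => /=; have := ltn_ord b; lia. Qed.

Lemma par_wcol (k : nat) (a : 'I_k) (b : 'I_2) : parity (wcol a b) = b.
Proof. apply: val_inj => /=; have := ltn_ord b; lia. Qed.

Lemma wcol_blk (k : nat) (c : 'I_(2 * k)) : wcol (blkidx c) (parity c) = c.
Proof. apply: val_inj => /=; lia. Qed.

Lemma sum_pair (V : nmodType) (k : nat) (F : 'I_(2 * k) -> V) :
  \sum_(r < 2 * k) F r = \sum_(a < k) (F (wcol a ord0) + F (wcol a o1)).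
Proof.
rewrite (reindex (fun p : 'I_k * 'I_2 => wcol p.1 p.2)) /=; last first.
  exists (fun r => (blkidx r, parity r)) => [[a b] _ | r _] /=.
    by rewrite blk_wcol par_wcol.
  by rewrite wcol_blk.
rewrite -(pair_big xpredT xpredT (fun a b => F (wcol a b))) /=.
by apply: eq_bigr => a _; rewrite big_ord_recl big_ord1.
Qed.

Section Rot.
Variable R : realType.

Definition rotE (s t : 'I_2) (x : R) : R :=
  if s == t then cos x else if (s : nat) == 0%N then - sin x else sin x.

Lemma rotE_le1 s t x : `|rotE s t x| <= 1.
Proof. by rewrite /rotE; case: ifP => _; [|case: ifP => _]; rewrite ?normrN ?cos_max ?sin_max. Qed.

Lemma RthX (q N : nat) (s t : 'I_2) :
  (Rtheta R q ^+ N) s t = rotE s t (N%:R * theta R q).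
Proof.
elim: N s t => [|N IH] s t.
  rewrite expr0 mul0r mxE /rotE cos0 sin0 oppr0.
  by case: (s == t) => //; case: ifP.
rewrite exprSr -mulmxE mxE big_ord_recl big_ord1 !IH !mxE.
rewrite -natr1 mulrDl mul1r.
have E0 : (ord0 : 'I_2) == lift ord0 ord0 = false by [].
case: s => [[|[|s]] Hs]; case: t => [[|[|t]] Ht] //=;
  rewrite /rotE /= ?cosD ?sinD; ring.
Qed.
End Rot.
Arguments rotE {R}.

Lemma sumC (R : rcfType) (I : finType) (f g : I -> R) :
  \sum_(i : I) (f i +i* g i) = (\sum_(i : I) f i) +i* (\sum_(i : I) g i).
Proof.
apply: (big_rec3 (fun x y z => x = y +i* z)) => // i x y z _ ->.
by [].
Qed.

Lemma sumRC (R : rcfType) (I : finType) (f : I -> R) :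
  \sum_(i : I) (f i)%:C = (\sum_(i : I) f i)%:C.
Proof.
have -> : \sum_(i : I) (f i)%:C = \sum_(i : I) (f i +i* 0) by [].
by rewrite sumC big1_eq.
Qed.

Lemma normC_re (R : rcfType) (x y : R) : `|x|%:C <= `|x +i* y|.
Proof.
rewrite normc_def /= lecR -sqrtr_sqr.
rewrite ler_sqrt; last by rewrite addr_ge0 // sqr_ge0.
by rewrite lerDl sqr_ge0.
Qed.

Lemma normC_im (R : rcfType) (x y : R) : `|y|%:C <= `|x +i* y|.
Proof.
rewrite normc_def /= lecR -sqrtr_sqr.
rewrite ler_sqrt; last by rewrite addr_ge0 // sqr_ge0.
by rewrite addrC lerDl sqr_ge0.
Qed.

Lemma normC_ub (R : rcfType) (x y : R) : `|x +i* y| <= (`|x| + `|y|)%:C.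
Proof.
rewrite normc_def /= lecR.
have h0 : 0 <= `|x| + `|y| by rewrite addr_ge0.
rewrite -[X in _ <= X](ger0_norm h0) -[X in _ <= X]sqrtr_sqr.
rewrite ler_sqrt ?sqr_ge0 //.
rewrite sqrrD -(real_normK (num_real x)) -(real_normK (num_real y)).
have := mulr_ge0 (normr_ge0 x) (normr_ge0 y); lra.
Qed.

Section Bridge.
Variables (R : realType) (q n k : nat) (sel : 'I_k -> 'I_n).
Local Notation G := (Gtilde R q sel).
Local Notation th := (theta R q).

Lemma G_entry (a b : 'I_k) (s t : 'I_2) :
  G (wcol a s) (wcol b t) = rotE s t ((sel b * a)%N%:R * th).
Proof. by rewrite /Gtilde !mxE !blk_wcol !par_wcol RthX. Qed.

Lemma G_le1 i j : `|G i j| <= 1.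
Proof.
have := G_entry (blkidx i) (blkidx j) (parity i) (parity j).
by rewrite !wcol_blk => ->; exact: rotE_le1.
Qed.

Lemma mG_entry (m : 'rV[R]_(2 * k)) (b : 'I_k) (t : 'I_2) :
  (m *m G) 0 (wcol b t) = \sum_(a < k)
    (m 0 (wcol a ord0) * rotE ord0 t ((sel b * a)%N%:R * th)
     + m 0 (wcol a o1) * rotE o1 t ((sel b * a)%N%:R * th)).
Proof. by rewrite mxE sum_pair; apply: eq_bigr => a _; rewrite !G_entry. Qed.

Definition wv (m : 'rV[R]_(2 * k)) (a : nat) : R[i] :=
  oapp (fun a' : 'I_k => (m 0 (wcol a' ord0)) +i* (- m 0 (wcol a' o1))) 0 (insub a).

Lemma wvE m (a : 'I_k) : wv m a = (m 0 (wcol a ord0)) +i* (- m 0 (wcol a o1)).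
Proof. by rewrite /wv valK. Qed.

Lemma bridge m (b : 'I_k) :
  (\poly_(i < k) wv m i).[om R q ^+ sel b] =
  ((m *m G) 0 (wcol b ord0)) +i* (- (m *m G) 0 (wcol b o1)).
Proof.
rewrite horner_poly.
under eq_bigr => a _ do rewrite wvE -exprM omX mulcE.
rewrite sumC !mG_entry -sumrN.
apply/eqP; rewrite eq_complex /=; apply/andP; split; apply/eqP;
  apply: eq_bigr => a _; rewrite /rotE /=; ring.
Qed.

End Bridge.

Lemma RexpC (R : realType) (x : R) N : (x ^+ N)%:C = (x%:C) ^+ N :> R[i].
Proof. by elim: N => [|N IH] //; rewrite !exprS RmulC IH. Qed.

Section Final.
Variables (R : realType) (q n k : nat) (sel : 'I_k -> 'I_n).
Hypotheses (oq : odd q) (nq : (n <= q)%N) (sel_inj : injective sel).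
Local Notation G := (Gtilde R q sel).

Lemma rowbound (m : 'rV[R]_(2 * k)) (c : 'I_(2 * k)) :
  `|m 0 c| <= q%:R ^+ (q - k - 1) *
    \sum_(b < k) (`|(m *m G) 0 (wcol b ord0)| + `|(m *m G) 0 (wcol b o1)|).
Proof.
have k0 : (0 < k)%N by have := ltn_ord c; lia.
have n0 : (0 < n)%N by have := ltn_ord (sel (Ordinal k0)); lia.
have q0 : (0 < q)%N by lia.
have kn : (k <= n)%N by have := leq_card sel sel_inj; rewrite !card_ord.
have kq : (k <= q)%N by exact: leq_trans kn nq.
pose e := fun b => widen_ord nq (sel b).
have e_inj : injective e.
  by move=> x y /(congr1 val) /= /val_inj /sel_inj.
set a := blkidx c.
have hc := @core _ q (om R q) q0 (@omq R q q0) (@omN R q)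
  (fun m hm => @omd R q m oq hm) k (@wv R k m) kq e e_inj a (ltn_ord a).
rewrite (eq_bigr (fun b => `|((m *m G) 0 (wcol b ord0)) +i* (- (m *m G) 0 (wcol b o1))|)) in hc;
  last by move=> b _; rewrite /e /= bridge.
have h1 : `|m 0 c|%:C <= `|@wv R k m a|.
  have -> : m 0 c = m 0 (wcol a (parity c)) by rewrite /a wcol_blk.
  rewrite wvE.
  have [p0|p1] : parity c = ord0 \/ parity c = o1.
    by case: (parity c) => [[|[|?]] ?] //; [left|right]; apply: val_inj.
  - by rewrite p0 normC_re.
  - by rewrite p1 -normrN normC_im.
have h2 : \sum_(b < k) `|((m *m G) 0 (wcol b ord0)) +i* (- (m *m G) 0 (wcol b o1))|
   <= (\sum_(b < k) (`|(m *m G) 0 (wcol b ord0)| + `|(m *m G) 0 (wcol b o1)|))%:C.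
  rewrite -sumRC; apply: ler_sum => b _.
  by rewrite -[X in _ + X]normrN normC_ub.
rewrite -lecR RmulC RexpC RnatC.
apply: le_trans h1 _; apply: le_trans hc _.
by apply: ler_wpM2l => //; rewrite exprn_ge0 // ler0n.
Qed.

Lemma G_unit : G \in unitmx.
Proof.
rewrite unitmxE unitfE; apply/negP => /det0P [v vn0 vG].
move/negP: vn0; apply; apply/eqP/rowP => c; rewrite mxE.
apply/eqP; rewrite -normr_le0.
apply: le_trans (rowbound v c) _.
rewrite vG big1 ?mulr0 // => b _.
by rewrite !mxE normr0 addr0.
Qed.

Lemma inv_entry i j : `|invmx G i j| <= q%:R ^+ (q - k - 1) * (2 * k)%:R.
Proof.
have := rowbound (row i (invmx G)) j.
rewrite -row_mul mulVmx ?G_unit // mxE => h; apply: le_trans h _.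
apply: ler_wpM2l; first by rewrite exprn_ge0 // ler0n.
apply: le_trans (_ : \sum_(b < k) (2 : R) <= _).
  apply: ler_sum => b _; rewrite !mxE.
  by apply: lerD; case: (_ == _); rewrite ?normr1 ?normr0 ?ler01.
by rewrite sumr_const card_ord natrM mulr_natr.
Qed.

End Final.

Section Opnorm.
Variable R : realType.

Lemma vnorm_entry (m : nat) (v : 'cV[R]_m) j : vnorm v <= 1 -> `|v j 0| <= 1.
Proof.
move=> hv.
have S0 : 0 <= \sum_(i < m) v i 0 ^+ 2 by apply: sumr_ge0 => i _; exact: sqr_ge0.
have S1 : \sum_(i < m) v i 0 ^+ 2 <= 1.
  by move: hv; rewrite /vnorm -{1}sqrtr1 ler_sqrt.
have : v j 0 ^+ 2 <= 1.
  apply: le_trans S1; rewrite (bigD1 j) //= lerDl.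
  by apply: sumr_ge0 => i _; exact: sqr_ge0.
rewrite -(real_normK (num_real _)) => h.
have n0 := normr_ge0 (v j 0).
nra.
Qed.

Lemma opnorm_bnd (m : nat) (M : 'M[R]_m) (B : R) :
  0 <= B -> (forall i j, `|M i j| <= B) ->
  0 <= opnorm M <= m%:R ^+ 2 * B.
Proof.
move=> B0 hM.
set E := [set vnorm (M *m v) | v in [set v : 'cV[R]_m | vnorm v <= 1]]%classic.
have ub : ubound E (m%:R ^+ 2 * B).
  move=> _ [v hv <-].
  have he i : `|(M *m v) i 0| <= m%:R * B.
    rewrite mxE; apply: le_trans (ler_norm_sum _ _ _) _.
    apply: le_trans (_ : \sum_(j < m) B <= _); last first.
      by rewrite sumr_const card_ord mulr_natl.
    apply: ler_sum => j _; rewrite normrM.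
    rewrite -[B]mulr1; apply: ler_pM;
      [exact: normr_ge0 | exact: normr_ge0 | exact: hM | exact: vnorm_entry].
  have Y0 : 0 <= m%:R ^+ 2 * B by rewrite mulr_ge0 // exprn_ge0 // ler0n.
  rewrite /vnorm -[X in _ <= X](ger0_norm Y0) -[X in _ <= X]sqrtr_sqr.
  rewrite ler_sqrt; last by rewrite sqr_ge0.
  apply: le_trans (_ : \sum_(i < m) (m%:R * B) ^+ 2 <= _).
    apply: ler_sum => i _; rewrite -(real_normK (num_real _)) !expr2.
    by apply: ler_pM; [exact: normr_ge0 | exact: normr_ge0 | exact: he | exact: he].
  rewrite sumr_const card_ord -(mulr_natl ((m%:R * B) ^+ 2) m).
  have -> : m%:R * (m%:R * B) ^+ 2 = m%:R ^+ 3 * B ^+ 2 :> R by ring.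
  have -> : (m%:R ^+ 2 * B) ^+ 2 = m%:R ^+ 4 * B ^+ 2 :> R by ring.
  apply: ler_wpM2r; first exact: sqr_ge0.
  have : (m = 0 \/ 0 < m)%N by case: (m) => [|?]; [left|right].
  case=> [->|m0]; first by rewrite !expr0n.
  by apply: ler_weXn2l; rewrite // ler1n.
have vn0 : vnorm (0 : 'cV[R]_m) = 0.
  by rewrite /vnorm big1 ?sqrtr0 // => i _; rewrite mxE expr2 mulr0.
have h0 : E 0.
  exists 0; last by rewrite mulmx0 vn0.
  by rewrite /= vn0 ler01.
have ne : (E !=set0)%classic by exists 0.
apply/andP; split; last exact: ge_sup.
have hub : has_ubound E by exists (m%:R ^+ 2 * B).
exact: (ub_le_sup hub h0).
Qed.
End Opnorm.

Local Close Scope complex_scope.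

Theorem theorem2 (R : realType) :
  exists C : R, 0 < C /\
  forall (n q kA : nat), odd q -> (n <= q)%N -> (1 <= kA)%N -> (kA <= n)%N ->
  forall sel : 'I_kA -> 'I_n, injective sel ->
    (Gtilde R q sel \in unitmx) /\
    cond_num (Gtilde R q sel) <= C * (q%:R `^ (q%:R - kA%:R + 11 / 2)).
Proof.
exists 32; split; first by rewrite ltr0n.
move=> n q k oq nq k1 kn sel sel_inj.
split; first exact: G_unit.
have q0 : (0 < q)%N by lia.
have kq : (k <= q)%N by lia.
set N := (q - k - 1)%N.
have B0 : 0 <= q%:R ^+ N * (2 * k)%:R :> R by rewrite mulr_ge0 // ?exprn_ge0 ler0n.
have /andP[g0 g1] := @opnorm_bnd R _ _ _ ler01 (@G_le1 R q n k sel).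
have /andP[i0 i1] := @opnorm_bnd R _ _ _ B0 (@inv_entry R q n k sel oq nq sel_inj).
rewrite /cond_num.
apply: le_trans (_ : ((2 * k)%:R ^+ 2 * 1) * ((2 * k)%:R ^+ 2 * (q%:R ^+ N * (2 * k)%:R)) <= _).
  by apply: ler_pM.
have -> : ((2 * k)%:R ^+ 2 * 1) * ((2 * k)%:R ^+ 2 * (q%:R ^+ N * (2 * k)%:R))
    = 32 * (k%:R ^+ 5 * q%:R ^+ N) :> R.
  by rewrite natrM; ring.
apply: ler_wpM2l => //.
have q1 : 1 <= q%:R :> R by rewrite ler1n.
apply: le_trans (_ : q%:R ^+ 5 * q%:R ^+ N <= _).
  apply: ler_wpM2r; first by rewrite exprn_ge0 // ler0n.
  by rewrite ler_pXn2r // ?nnegrE ?ler0n // ler_nat.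
rewrite -exprD.
apply: le_trans (_ : q%:R ^+ (q - k + 5) <= _).
  by apply: ler_weXn2l => //; rewrite /N; lia.
rewrite -powR_mulrn ?ler0n //.
apply: ler_powR => //.
rewrite natrD natrB //.
lra.
Qed.
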